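(* Let $\mathcal{M}=(E,\mathcal{B})$ be a matroid of rank $r$. The vanishing ideal $I(V_{\mathcal{M}})\subseteq\mathbb{R}[x_e:e\in E]$ is generated by the polynomials $x_e^2-x_e$ for all $e\in E$, the polynomial $\sum_{e\in E}x_e-r$, and the monomials $x^C=\prod_{e\in C}x_e$ for all circuits $C\subseteq E$ of $\mathcal{M}$.
   Context: $V_{\mathcal{M}}=\{\mathbf{1}_B:B\in\mathcal{B}\}\subset\mathbb{R}^E$ is the base configuration; for a point set $V$, $I(V)$ is the ideal of all real polynomials vanishing at every point of $V$. Circuits are the inclusion-minimal dependent sets (sets not contained in any basis). *)

(* Defs.v *)
From HB Require Import structures.
From mathcomp Require Import all_boot all_order all_algebra.
From mathcomp Require Import mpoly.
From mathcomp Require Import reals.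
Set Implicit Arguments. Unset Strict Implicit. Unset Printing Implicit Defensive.
Import Order.TTheory GRing.Theory Num.Theory.
Local Open Scope ring_scope.

Definition is_matroid_bases (n : nat) (bases : {set {set 'I_n}}) : Prop :=
  bases != set0 /\
  forall B1 B2, B1 \in bases -> B2 \in bases ->
    forall x, x \in B1 :\: B2 ->
      exists2 y, y \in B2 :\: B1 & (y |: (B1 :\ x)) \in bases.

Definition independent (n : nat) (bases : {set {set 'I_n}}) (A : {set 'I_n}) : bool :=
  [exists B in bases, A \subset B].

Definition dependent (n : nat) (bases : {set {set 'I_n}}) (A : {set 'I_n}) : bool :=
  ~~ independent bases A.

Definition circuit (n : nat) (bases : {set {set 'I_n}}) (C : {set 'I_n}) : bool :=
  dependent bases C && [forall D : {set 'I_n}, (D \proper C) ==> ~~ dependent bases D].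

Definition indicator (R : ringType) (n : nat) (B : {set 'I_n}) : 'I_n -> R :=
  fun e => if e \in B then 1 else 0.

(* vanishing ideal I(V_M) as a predicate on polynomials *)
Definition vanishes_on_bases (R : comRingType) (n : nat) (bases : {set {set 'I_n}})
  (p : {mpoly R[n]}) : Prop :=
  forall B, B \in bases -> p.@[indicator R B] = 0.

Definition in_ideal_gen (R : comRingType) (n : nat) (S : {mpoly R[n]} -> Prop)
  (p : {mpoly R[n]}) : Prop :=
  exists (k : nat) (c g : 'I_k -> {mpoly R[n]}),
    (forall i, S (g i)) /\ p = \sum_(i < k) c i * g i.

Definition matroid_gens (R : comRingType) (n : nat) (bases : {set {set 'I_n}}) (r : nat)
  (q : {mpoly R[n]}) : Prop :=
  (exists e : 'I_n, q = 'X_e ^+ 2 - 'X_e)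
  \/ q = \sum_(e < n) 'X_e - r%:R
  \/ (exists C : {set 'I_n}, circuit bases C /\ q = \prod_(e in C) 'X_e).

(* Main.v *)
Require Import Defs.
From HB Require Import structures.
From mathcomp Require Import all_boot all_order all_algebra.
From mathcomp Require Import mpoly.
From mathcomp Require Import reals.
From mathcomp Require Import ring.
Set Implicit Arguments. Unset Strict Implicit. Unset Printing Implicit Defensive.
Import Order.TTheory GRing.Theory Num.Theory.
Local Open Scope ring_scope.

Section Ideal.
Variables (R : comRingType) (n : nat) (S : {mpoly R[n]} -> Prop).
Notation J := (in_ideal_gen S).

Lemma J0 : J 0.
Proof. exists 0%N, (fun _ => 0), (fun _ => 0); split; first by case.
by rewrite big_ord0. Qed.

Lemma Jgen c g : S g -> J (c * g).
Proof. move=> Sg; exists 1%N, (fun _ => c), (fun _ => g); split=> //.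
by rewrite big_ord1. Qed.

Lemma JD p q : J p -> J q -> J (p + q).
Proof.
move=> [k1 [c1 [g1 [H1 ->]]]] [k2 [c2 [g2 [H2 ->]]]].
exists (k1 + k2)%N, (fun i => match split i with inl j => c1 j | inr j => c2 j end),
  (fun i => match split i with inl j => g1 j | inr j => g2 j end); split.
  by move=> i; case: (split i).
rewrite big_split_ord /=; congr (_ + _); apply: eq_bigr => i _.
  by move: (unsplitK (inl 'I_k2 i)) => /= ->.
by move: (unsplitK (inr 'I_k1 i)) => /= ->.
Qed.

Lemma JM q p : J p -> J (q * p).
Proof.
move=> [k [c [g [H ->]]]]; exists k, (fun i => q * c i), g; split=> //.
by rewrite mulr_sumr; apply: eq_bigr => i _; rewrite mulrA.
Qed.

Lemma JN p : J p -> J (- p).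
Proof. by move=> Hp; rewrite -mulN1r; apply: JM. Qed.

Lemma JB p q : J p -> J q -> J (p - q).
Proof. by move=> Hp Hq; apply: JD => //; apply: JN. Qed.

Lemma Jsum (I : finType) (F : I -> {mpoly R[n]}) : (forall i, J (F i)) -> J (\sum_i F i).
Proof. move=> H; apply: (big_ind J) => //; [exact: J0 | exact: JD]. Qed.

Variables (L : {mpoly R[n]}) (v : 'I_n -> R).
Definition Pf (p : {mpoly R[n]}) := J (p * L - (p.@[v])%:MP * L).

Lemma PfC c : Pf c%:MP.
Proof. by rewrite /Pf mevalC subrr; apply: J0. Qed.

Lemma PfD p q : Pf p -> Pf q -> Pf (p + q).
Proof.
rewrite /Pf => Hp Hq; rewrite mevalD mpolyCD.
have -> : (p + q) * L - ((p.@[v])%:MP + (q.@[v])%:MP) * L =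
  (p * L - (p.@[v])%:MP * L) + (q * L - (q.@[v])%:MP * L) by ring.
exact: JD.
Qed.

Lemma PfM p q : Pf p -> Pf q -> Pf (p * q).
Proof.
rewrite /Pf => Hp Hq; rewrite mevalM mpolyCM.
have -> : p * q * L - ((p.@[v])%:MP * (q.@[v])%:MP) * L =
  p * (q * L - (q.@[v])%:MP * L) + (q.@[v])%:MP * (p * L - (p.@[v])%:MP * L) by ring.
by apply: JD; apply: JM.
Qed.

Lemma Pf_all : (forall i, Pf 'X_i) -> forall p, Pf p.
Proof.
move=> HX p; rewrite (mpolyE p); apply: (big_ind Pf).
- by rewrite -mpolyC0; apply: PfC.
- exact: PfD.
move=> m _; rewrite -mul_mpolyC; apply: PfM; first exact: PfC.
rewrite mpolyXE_id; apply: (big_ind Pf).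
- by rewrite -mpolyC1; apply: PfC.
- exact: PfM.
move=> i _; elim: (m i) => [|k IH]; first by rewrite expr0 -mpolyC1; apply: PfC.
by rewrite exprS; apply: PfM.
Qed.
End Ideal.

Section Main.
Variables (R : realType) (n : nat) (bases : {set {set 'I_n}}) (r : nat).
Hypothesis hr : forall B, B \in bases -> #|B| = r.
Notation J := (in_ideal_gen (matroid_gens bases r)).

Definition Lf (f : {ffun 'I_n -> bool}) : {mpoly R[n]} :=
  \prod_(i < n) (if f i then 'X_i else 1 - 'X_i).
Definition vf (f : {ffun 'I_n -> bool}) := indicator R [set i | f i].

Lemma PfX f i : Pf (matroid_gens bases r) (Lf f) (vf f) 'X_i.
Proof.
rewrite /Pf mevalXU /vf /indicator inE /Lf (bigD1 i) //=.
set L' := \prod_(j < n | j != i) _.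
have G : J (L' * ('X_i ^+ 2 - 'X_i)) by apply: Jgen; left; exists i.
case: (f i).
- have -> : 'X_i * ('X_i * L') - (1:R)%:MP * ('X_i * L') = L' * ('X_i ^+ 2 - 'X_i).
    by rewrite mpolyC1; ring.
  exact: G.
- have -> : 'X_i * ((1 - 'X_i) * L') - (0:R)%:MP * ((1 - 'X_i) * L') =
    - (L' * ('X_i ^+ 2 - 'X_i)).
    by rewrite mpolyC0; ring.
  exact: JN.
Qed.

Lemma sumL : \sum_(f : {ffun 'I_n -> bool}) Lf f = 1.
Proof.
rewrite /Lf -(bigA_distr_bigA (fun i (b : bool) => if b then 'X_i else 1 - 'X_i)) /=.
by apply: big1 => i _; rewrite big_bool /= addrC subrK.
Qed.

Lemma card_sum (S : {set 'I_n}) : \sum_(e < n) indicator R S e = #|S|%:R.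
Proof.
rewrite /indicator -big_mkcond /= -sum1_card natr_sum.
by apply: eq_bigl.
Qed.

Lemma key f p : vanishes_on_bases bases p -> J (p * Lf f).
Proof.
move=> Hp; set S := [set i | f i].
have PA := Pf_all (@PfX f) .
case: (boolP (S \in bases)) => [SB|SnB].
  have := PA p; rewrite /Pf /vf -/S (Hp _ SB) mpolyC0 mul0r subr0; exact.
suff HL : J (Lf f) by apply: JM.
case: (boolP (independent bases S)) => [/existsP [B /andP [Bb SsB]] | dep].
-
  have neq : #|S| != r.
    apply/eqP => cS; move: SnB; suff -> : S = B by rewrite Bb.
    apply/eqP; rewrite eqEcard SsB /= (hr Bb) -cS; exact: leqnn.
  set q : {mpoly R[n]} := \sum_(e < n) 'X_e - r%:R.
  have Jq : J (Lf f * q) by apply: Jgen; right; left.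
  have Pq := PA q; rewrite /Pf in Pq.
  have ev : q.@[vf f] = #|S|%:R - r%:R.
    rewrite /q mevalB -/(meval _ _) raddf_sum /=.
    under eq_bigr do rewrite mevalXU.
    rewrite card_sum.
    by congr (_ - _); rewrite -mpolyC_nat mevalC.
  have c0 : (#|S|%:R - r%:R : R) != 0.
    by rewrite subr_eq0 eqr_nat.
  rewrite ev in Pq.
  have J1 : J ((#|S|%:R - r%:R : R)%:MP * Lf f).
    have -> : (#|S|%:R - r%:R : R)%:MP * Lf f =
       Lf f * q - (q * Lf f - (#|S|%:R - r%:R : R)%:MP * Lf f) by ring.
    exact: JB.
  have -> : Lf f = ((#|S|%:R - r%:R : R)^-1)%:MP * ((#|S|%:R - r%:R : R)%:MP * Lf f).
    by rewrite mulrA -mpolyCM mulVf // mpolyC1 mul1r.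
  exact: JM.
- (* dependent: contains a circuit *)
  have [C minC CS] := minset_exists (P := fun D => dependent bases D) dep.
  have circC : circuit bases C.
    move/minsetP: minC => [dC minD]; rewrite /circuit dC /=.
    apply/forallP => D; apply/implyP => DC; apply/negP => dD.
    have eDC := minD D dD (proper_sub DC).
    by move: DC; rewrite eDC properxx.
  have -> : Lf f = (\prod_(e in C) 'X_e) * \prod_(i < n | i \notin C)
                     (if f i then 'X_i else 1 - 'X_i).
    rewrite /Lf (bigID (fun i => i \in C)) /=; congr (_ * _).
    apply: eq_bigr => i iC; move/subsetP: CS => /(_ i iC).
    by rewrite inE => ->.
  rewrite mulrC; apply: Jgen; right; right; exists C; split=> //.
Qed.

End Main.

Theorem proposition4p4 (R : realType) (n : nat) (bases : {set {set 'I_n}}) (r : nat)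
  (hM : is_matroid_bases bases)
  (hr : forall B, B \in bases -> #|B| = r) :
  forall p : {mpoly R[n]},
    vanishes_on_bases bases p <-> in_ideal_gen (matroid_gens bases r) p.
Proof.
move=> p; split.
- move=> Hp; rewrite -[p]mulr1 -(sumL R n) mulr_sumr.
  by apply: Jsum => f; apply: key.
- move=> [k [c [g [Hg ->]]]] B HB.
  rewrite -/(meval _ _) raddf_sum /=; apply: big1 => i _; rewrite mevalM.
  suff -> : (g i).@[indicator R B] = 0 by rewrite mulr0.
  case: (Hg i) => [[e ->]|[->|[C [circC ->]]]].
  + rewrite mevalB expr2 mevalM mevalXU /indicator.
    by case: (e \in B); rewrite ?mulr1 ?mulr0 subrr.
  + rewrite mevalB -/(meval _ _) raddf_sum /=.
    under eq_bigr do rewrite mevalXU.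
    by rewrite card_sum (hr _ HB) -mpolyC_nat mevalC subrr.
  + move: circC => /andP [dC _].
    have : ~~ (C \subset B).
      by apply: contra dC => CB; apply/existsP; exists B; rewrite HB CB.
    case/subsetPn => e eC eB.
    by rewrite (bigD1 e) //= mevalM mevalXU /indicator (negbTE eB) mul0r.
Qed.
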